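(* Every maximal biflag of $M$ (maximal with respect to inclusion among biflags) has length exactly $n-1$.
   Context: Let $M$ be a matroid with no loops and no coloops on the ground set $E=\{0,1,\dots,n\}$, of rank $r+1$; its dual $M^\perp$ has rank $n-r$. A biflat of $M$ is a pair $F|G$ where $F$ is a flat of $M$, $G$ is a flat of $M^\perp$, both are nonempty, they are not both equal to $E$, and $F\cup G=E$. Two biflats $F|G$, $F'|G'$ are compatible if ($F\subseteq F'$ and $G\supseteq G'$) or ($F\supseteq F'$ and $G\subseteq G'$). A biflag is a set of pairwise compatible biflats with $\bigcup_{F|G}(F\cap G)\neq E$; its length is its number of biflats. *)

(* Defs.v *)
From mathcomp Require Import all_boot.
Set Implicit Arguments. Unset Strict Implicit. Unset Printing Implicit Defensive.

Section Matroid.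
Variable T : finType.
Implicit Types (ind : {set T} -> bool) (A B F G I J : {set T}).

Definition is_matroid ind : Prop :=
  [/\ ind set0,
      (forall I J, ind J -> I \subset J -> ind I) &
      (forall I J, ind I -> ind J -> #|I| < #|J| ->
         exists2 x, x \in J :\: I & ind (x |: I))].

Definition mrank ind A : nat := \max_(I : {set T} | ind I && (I \subset A)) #|I|.

Definition mbasis ind B : bool :=
  ind B && [forall I : {set T}, (ind I && (B \subset I)) ==> (I == B)].

Definition dual ind : {set T} -> bool :=
  fun I => [exists B : {set T}, mbasis ind B && [disjoint I & B]].

Definition flat ind F : bool :=
  [forall x, (x \notin F) ==> (mrank ind F < mrank ind (x |: F))].

Definition loop ind (x : T) : bool := ~~ ind [set x].
Definition coloop ind (x : T) : bool := [forall B : {set T}, mbasis ind B ==> (x \in B)].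

Definition biflat ind (p : {set T} * {set T}) : bool :=
  [&& flat ind p.1, flat (dual ind) p.2, p.1 != set0, p.2 != set0,
      ~~ ((p.1 == setT) && (p.2 == setT)) & p.1 :|: p.2 == setT].

Definition compatible (p q : {set T} * {set T}) : bool :=
  ((p.1 \subset q.1) && (q.2 \subset p.2)) ||
  ((q.1 \subset p.1) && (p.2 \subset q.2)).

Definition biflag ind (S : {set {set T} * {set T}}) : bool :=
  [forall p in S, biflat ind p] &&
  [forall p in S, forall q in S, compatible p q] &&
  (\bigcup_(p in S) (p.1 :&: p.2) != setT).

Definition maximal_biflag ind (S : {set {set T} * {set T}}) : Prop :=
  biflag ind S /\
  forall S' : {set {set T} * {set T}}, biflag ind S' -> S \subset S' -> S' = S.

End Matroid.

(* Main.v *)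
Require Import Defs.
From mathcomp Require Import all_boot.
From mathcomp Require Import zify.
Set Implicit Arguments. Unset Strict Implicit. Unset Printing Implicit Defensive.

Section Generic.
Variable T : finType.
Variable ind : {set T} -> bool.
Hypothesis ind0 : ind set0.
Hypothesis indS : forall I J : {set T}, ind J -> I \subset J -> ind I.

Implicit Types (A B I J : {set T}).
Local Notation rk := (mrank ind).

Lemma rk_ge I A : ind I -> I \subset A -> #|I| <= rk A.
Proof. by move=> hI hIA; apply: (leq_bigmax_cond I); rewrite hI hIA. Qed.

Lemma rk_max A : exists I, [/\ ind I, I \subset A & #|I| = rk A].
Proof.
have P0 : ind set0 && (set0 \subset A) by rewrite ind0 sub0set.
case: (@arg_maxnP _ set0 (fun I : {set T} => ind I && (I \subset A)) (fun I : {set T} => #|I|) P0) => I /andP[h1 h2] hmax.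
exists I; split => //; apply/eqP; rewrite eqn_leq rk_ge //=.
by apply/bigmax_leqP => J hJ; apply: hmax.
Qed.

Lemma rk_le_card A : rk A <= #|A|.
Proof.
have [I [_ hIA <-]] := rk_max A; exact: subset_leq_card.
Qed.

Lemma rk_mono A B : A \subset B -> rk A <= rk B.
Proof.
move=> hAB; have [I [h1 h2 <-]] := rk_max A; apply: rk_ge => //.
exact: subset_trans hAB.
Qed.

Lemma rk0 : rk set0 = 0.
Proof. by apply/eqP; rewrite -leqn0 -(cards0 T) rk_le_card. Qed.

Lemma rk_U1 x A : rk (x |: A) <= (rk A).+1.
Proof.
have [I [h1 h2 <-]] := rk_max (x |: A).
have hI : I :\ x \subset A.
  apply/subsetP => y; rewrite !inE => /andP[yx yI].
  move/subsetP: h2 => /(_ y yI); by rewrite !inE (negbTE yx).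
have := rk_ge (indS h1 (subsetDl I [set x])) hI.
have := cardsD1 x I; case: (x \in I) => /=; lia.
Qed.


Section Aug.
Hypothesis indA : forall I J, ind I -> ind J -> #|I| < #|J| ->
  exists2 x, x \in J :\: I & ind (x |: I).

Lemma rk_ext I A : ind I -> I \subset A ->
  exists J, [/\ ind J, I \subset J, J \subset A & #|J| = rk A].
Proof.
move=> hI hIA; move: {2}(rk A - #|I|) (erefl (rk A - #|I|)) => k.
elim: k I hI hIA => [|k IH] I hI hIA hk.
  exists I; split => //; apply/eqP; rewrite eqn_leq rk_ge //=; lia.
have [K [hK hKA hKc]] := rk_max A.
have [|x /setDP[xK xI] hx] := indA hI hK; first lia.
have hxA : x |: I \subset A by rewrite subUset sub1set (subsetP hKA x xK) hIA.
have hk' : rk A - #|x |: I| = k by rewrite cardsU1 xI; lia.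
have [J [h1 h2 h3 h4]] := IH _ hx hxA hk'.
by exists J; split => //; apply: subset_trans h2; apply: subsetUr.
Qed.

Lemma rk_submod A B : rk (A :|: B) + rk (A :&: B) <= rk A + rk B.
Proof.
have [I [hI hIAB hIc]] := rk_max (A :&: B).
have [J [hJ hIJ hJAB hJc]] := rk_ext hI (subset_trans hIAB (subset_trans (subsetIl A B) (subsetUl A B))).
have e1 := cardsUI (J :&: A) (J :&: B).
have e2 : (J :&: A) :|: (J :&: B) = J by rewrite -setIUr; apply/setIidPl.
have h3 : #|I| <= #|(J :&: A) :&: (J :&: B)|.
  apply: subset_leq_card; rewrite subsetI !subsetI hIJ /=.
  move/subsetP: hIAB => h; apply/andP; split; apply/subsetP => y /h; rewrite inE => /andP[] //.
have h4 : #|J :&: A| <= rk A by apply: rk_ge; [apply: (indS hJ); apply: subsetIl|apply: subsetIr].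
have h5 : #|J :&: B| <= rk B by apply: rk_ge; [apply: (indS hJ); apply: subsetIl|apply: subsetIr].
rewrite e2 in e1; lia.
Qed.
End Aug.

End Generic.

Definition flatr (T : finType) (rho : {set T} -> nat) (F : {set T}) :=
  [forall x, (x \notin F) ==> (rho F < rho (x |: F))].

Lemma flatE (T : finType) (ind : {set T} -> bool) (F : {set T}) : flat ind F = flatr (mrank ind) F.
Proof. by []. Qed.

Section RankFun.
Variable T : finType.
Variable rho : {set T} -> nat.
Implicit Types (A B F H X : {set T}).
Hypothesis mono : forall A B, A \subset B -> rho A <= rho B.
Hypothesis unit : forall x A, rho (x |: A) <= (rho A).+1.
Hypothesis submod : forall A B, rho (A :|: B) + rho (A :&: B) <= rho A + rho B.

Lemma key x A B : rho (x |: A) <= rho A -> A \subset B -> rho (x |: B) <= rho B.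
Proof.
move=> h hAB.
have := submod (x |: A) B.
have -> : (x |: A) :|: B = x |: B by rewrite -setUA (setUidPr hAB).
have : rho A <= rho ((x |: A) :&: B).
  by apply: mono; rewrite subsetI subsetUr hAB.
lia.
Qed.

Definition cl A := [set x | rho (x |: A) <= rho A].

Lemma sub_cl A : A \subset cl A.
Proof. by apply/subsetP => x xA; rewrite inE; move: xA; rewrite -sub1set => /setUidPr ->. Qed.

Lemma rk_union_cl A X : X \subset cl A -> rho (A :|: X) <= rho A.
Proof.
move: {2}#|X| (erefl #|X|) => k; elim: k X => [|k IH] X hk hX.
  by move/eqP: hk; rewrite cards_eq0 => /eqP ->; rewrite setU0.
have [x xX] : exists x, x \in X by apply/set0Pn; rewrite -card_gt0 hk.
have e : X = x |: (X :\ x) by rewrite setD1K.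
have h1 : rho (A :|: (X :\ x)) <= rho A.
  apply: IH; first by move: (cardsD1 x X); rewrite xX hk; lia.
  exact: subset_trans (subsetDl _ _) hX.
have h2 : rho (x |: (A :|: X :\ x)) <= rho (A :|: X :\ x).
  apply: (key (A := A)); last exact: subsetUl.
  by move/subsetP: hX => /(_ x xX); rewrite inE.
rewrite e setUCA; lia.
Qed.

Lemma rk_cl A : rho (cl A) = rho A.
Proof.
apply/eqP; rewrite eqn_leq (mono (sub_cl A)) andbT.
have := rk_union_cl (subxx (cl A)); rewrite (setUidPr (sub_cl A)); done.
Qed.

Lemma cl_flat A : flatr rho (cl A).
Proof.
apply/forallP => y; apply/implyP => hy.
rewrite rk_cl; move: hy; rewrite inE -ltnNge => hy.
apply: leq_trans hy _; apply: mono; apply: setUS; exact: sub_cl.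
Qed.

Lemma flat_lt F F' x : flatr rho F -> F \subset F' -> x \in F' -> x \notin F -> rho F < rho F'.
Proof.
move=> /forallP /(_ x) /implyP hF hFF' xF' xF.
apply: leq_trans (hF xF) _; apply: mono; by rewrite subUset sub1set xF' hFF'.
Qed.

Lemma cl_min F X : flatr rho F -> X \subset F -> cl X \subset F.
Proof.
move=> hF hXF; apply/subsetP => x; rewrite inE => hx.
apply/negPn/negP => xF.
have := key hx hXF; move/forallP: hF => /(_ x) /implyP /(_ xF); lia.
Qed.

Lemma between F F' x : flatr rho F -> flatr rho F' -> F \subset F' -> x \in F' -> x \notin F ->
  rho F + 2 <= rho F' ->
  exists H, [/\ flatr rho H, F \subset H, H \subset F', x \notin H & rho F < rho H < rho F'].
Proof.
move=> hF hF' hFF' xF' xF hr.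
have hxF : rho (x |: F) = (rho F).+1.
  apply/eqP; rewrite eqn_leq unit; move/forallP: (hF) => /(_ x) /implyP /(_ xF) -> //.
pose K := cl (x |: F).
have [y yF' yK] : exists2 y, y \in F' & y \notin K.
  apply/exists_inP; rewrite -negb_forall_in; apply/negP => /forall_inP h.
  have : F' \subset K by apply/subsetP => z /h.
  move/mono; rewrite /K rk_cl hxF; lia.
have yF : y \notin F by apply: contra yK; apply: subsetP; apply: subset_trans (sub_cl _); apply: subsetUr.
have hyF : rho (y |: F) = (rho F).+1.
  apply/eqP; rewrite eqn_leq unit; move/forallP: (hF) => /(_ y) /implyP /(_ yF) -> //.
have hyxF : rho (y |: (x |: F)) = (rho F).+2.
  apply/eqP; rewrite eqn_leq; move: (unit y (x |: F)); rewrite hxF => -> /=.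
  by move: yK; rewrite inE -ltnNge hxF.
exists (cl (y |: F)); split.
- exact: cl_flat.
- exact: subset_trans (subsetUr _ _) (sub_cl _).
- by apply: cl_min => //; rewrite subUset sub1set yF' hFF'.
- rewrite inE -ltnNge hyF setUCA hyxF //.
- have xH : x \notin cl (y |: F) by rewrite inE -ltnNge hyF setUCA hyxF.
  rewrite rk_cl hyF leqnn /=.
  rewrite -hyF -(rk_cl (y |: F)); apply: (flat_lt (cl_flat _) _ xF' xH).
  by apply: cl_min => //; rewrite subUset sub1set yF' hFF'.
Qed.

End RankFun.

Section Dual.
Variable T : finType.
Variable ind : {set T} -> bool.
Implicit Types (A B I J : {set T}).
Hypothesis ind0 : ind set0.
Hypothesis indS : forall I J, ind J -> I \subset J -> ind I.
Hypothesis indA : forall I J, ind I -> ind J -> #|I| < #|J| ->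
  exists2 x, x \in J :\: I & ind (x |: I).
Local Notation rk := (mrank ind).
Local Notation drk := (mrank (dual ind)).

Lemma mbasisP B : mbasis ind B = ind B && (#|B| == rk setT).
Proof.
apply/idP/idP.
- case/andP => hB /forallP hmax; rewrite hB /=.
  have [J [hJ hBJ _ hJc]] := rk_ext ind0 indA hB (subsetT B).
  by move: (hmax J); rewrite hJ hBJ /= => /eqP <-; rewrite hJc.
- case/andP => hB /eqP hc; rewrite /mbasis hB /=; apply/forallP => I; apply/implyP => /andP[hI hBI].
  rewrite eq_sym eqEcard hBI /= hc; exact: rk_ge (subsetT I).
Qed.

Lemma basis_ex : exists B, mbasis ind B.
Proof.
have [J [hJ _ _ hJc]] := rk_ext ind0 indA ind0 (sub0set setT).
by exists J; rewrite mbasisP hJ hJc eqxx.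
Qed.

Lemma dual0 : dual ind set0.
Proof. have [B hB] := basis_ex; rewrite /dual; apply/existsP; exists B; rewrite hB /=; apply/pred0P => x; by rewrite /= inE. Qed.

Lemma dualS I J : dual ind J -> I \subset J -> dual ind I.
Proof.
rewrite /dual; move=> /existsP[B /andP[hB hJB]] hIJ; apply/existsP; exists B; rewrite hB /=.
exact: disjointWl hIJ hJB.
Qed.

Lemma drk_formula A : drk A + rk setT = #|A| + rk (~: A).
Proof.
apply/eqP; rewrite eqn_leq; apply/andP; split.
- have [I [hI hIA hIc]] := rk_max dual0 A.
  case/existsP: hI => B /andP[hB hIB]; move: hB; rewrite mbasisP => /andP[hB /eqP hBc].
  have h1 : #|B :&: ~: A| <= rk (~: A) by apply: rk_ge; [apply: (indS hB); apply: subsetIl|apply: subsetIr].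
  have h2 := cardsID A B; rewrite setDE in h2.
  have h3 : #|(B :&: A) :|: I| <= #|A| by apply: subset_leq_card; rewrite subUset subsetIr hIA.
  have h4 := cardsUI (B :&: A) I.
  have h5 : (B :&: A) :&: I = set0.
    apply/eqP; rewrite setI_eq0; apply: disjointWl (subsetIl B A) _; by rewrite disjoint_sym.
  rewrite h5 cards0 in h4; lia.
- have [K [hK hKA hKc]] := rk_max ind0 (~: A).
  have [J [hJ hKJ _ hJc]] := rk_ext ind0 indA hK (subsetT K).
  have hJb : mbasis ind J by rewrite mbasisP hJ hJc eqxx.
  have hdI : dual ind (A :\: J).
    apply/existsP; exists J; rewrite hJb /= -setI_eq0; apply/eqP.
    by apply/setP => x; rewrite !inE; case: (x \in J); rewrite ?andbF.
  have h1 := rk_ge hdI (subsetDl A J).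
  have h2 : #|K| <= #|J :&: ~: A| by apply: subset_leq_card; rewrite subsetI hKJ hKA.
  have h3 := cardsID A J; rewrite setDE in h3.
  have h4 := cardsID J A.
  rewrite setIC in h4; lia.
Qed.

Lemma drk_setT : drk setT + rk setT = #|T|.
Proof. by rewrite drk_formula setCT (rk0 ind0) cardsT addn0. Qed.

Lemma drk_submod A B : drk (A :|: B) + drk (A :&: B) <= drk A + drk B.
Proof.
have e1 := drk_formula (A :|: B); have e2 := drk_formula (A :&: B).
have e3 := drk_formula A; have e4 := drk_formula B.
have e5 := cardsUI A B.
have := rk_submod ind0 indS indA (~: A) (~: B).
rewrite -setCI -setCU; lia.
Qed.

End Dual.
Ltac genr := repeat match goal with
  | |- context [mrank ?i ?A] => let x := fresh "r" in set (x := mrank i A) in *; clearbody x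
  | H : context [mrank ?i ?A] |- _ => let x := fresh "r" in set (x := mrank i A) in *; clearbody x
  end;
  repeat match goal with
  | |- context [#|?A|] => let x := fresh "c" in set (x := #|A|) in *; clearbody x
  | H : context [#|?A|] |- _ => let x := fresh "c" in set (x := #|A|) in *; clearbody x
  end.
Ltac keep t := lazymatch t with
  | nat => idtac | is_true (leq _ _) => idtac | @eq ?A _ _ => unify A nat | ~ (@eq ?A _ _) => unify A nat end.
Ltac clean := repeat match goal with H : ?t |- _ => tryif keep t then fail else clear H end.
Ltac slia := genr; intros; clean; lia.

Section Main.
Variable T : finType.
Variable ind : {set T} -> bool.
Implicit Types (A B I J F G : {set T}) (p q c : {set T} * {set T}).
Hypothesis ind0 : ind set0.
Hypothesis indS : forall I J, ind J -> I \subset J -> ind I.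
Hypothesis indA : forall I J, ind I -> ind J -> #|I| < #|J| ->
  exists2 x, x \in J :\: I & ind (x |: I).
Hypothesis noloop : forall x, ind [set x].
Hypothesis nocol : forall x, ~~ coloop ind x.

Local Notation rho := (mrank ind).
Local Notation sig := (mrank (dual ind)).

Lemma rmono A B : A \subset B -> rho A <= rho B. Proof. exact: rk_mono. Qed.
Lemma smono A B : A \subset B -> sig A <= sig B. Proof. exact: (rk_mono (dual0 ind0 indA)). Qed.
Lemma runit x A : rho (x |: A) <= (rho A).+1. Proof. exact: rk_U1. Qed.
Lemma sunit x A : sig (x |: A) <= (sig A).+1.
Proof. exact: (rk_U1 (dual0 ind0 indA) (@dualS _ ind)). Qed.
Lemma rsub A B : rho (A :|: B) + rho (A :&: B) <= rho A + rho B.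
Proof. exact: rk_submod. Qed.
Lemma ssub A B : sig (A :|: B) + sig (A :&: B) <= sig A + sig B.
Proof. exact: drk_submod. Qed.

Lemma r0 : rho set0 = 0. Proof. exact: rk0. Qed.
Lemma s0 : sig set0 = 0. Proof. exact: (rk0 (dual0 ind0 indA)). Qed.
Lemma r1 x : 1 <= rho [set x].
Proof. by have := rk_ge (noloop x) (subxx [set x]); rewrite cards1. Qed.
Lemma s1 x : 1 <= sig [set x].
Proof.
have h : dual ind [set x].
  move: (nocol x); rewrite /coloop negb_forall => /existsP[B]; rewrite negb_imply => /andP[hB xB].
  rewrite /dual; apply/existsP; exists B; by rewrite hB disjoints1.
by have := rk_ge h (subxx [set x]); rewrite cards1.
Qed.
Lemma rs_total : rho setT + sig setT = #|T|.
Proof. by rewrite addnC; apply: drk_setT. Qed.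

Lemma rpos A : A != set0 -> 1 <= rho A.
Proof. by case/set0Pn => x xA; apply: leq_trans (r1 x) _; apply: rmono; rewrite sub1set. Qed.
Lemma spos A : A != set0 -> 1 <= sig A.
Proof. by case/set0Pn => x xA; apply: leq_trans (s1 x) _; apply: smono; rewrite sub1set. Qed.

Lemma rflat0 : flatr rho set0.
Proof. apply/forallP => x; apply/implyP => _; by rewrite setU0 r0 r1. Qed.
Lemma sflat0 : flatr sig set0.
Proof. apply/forallP => x; apply/implyP => _; by rewrite setU0 s0 s1. Qed.
Lemma flatT (rh : {set T} -> nat) : flatr rh setT.
Proof. apply/forallP => x; apply/implyP; by rewrite inE. Qed.

Lemma rflat_lt F F' x : flatr rho F -> F \subset F' -> x \in F' -> x \notin F -> rho F < rho F'.
Proof. exact: (@flat_lt T rho rmono). Qed.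
Lemma sflat_lt F F' x : flatr sig F -> F \subset F' -> x \in F' -> x \notin F -> sig F < sig F'.
Proof. exact: (@flat_lt T sig smono). Qed.

Definition le p q := (p.1 \subset q.1) && (q.2 \subset p.2).
Definition good p := [&& flatr rho p.1, flatr sig p.2 & p.1 :|: p.2 == setT].
Definition psi p := rho p.1 + sig setT - sig p.2.

Ltac genp := repeat match goal with
  | |- context [psi ?p] => let x := fresh "ps" in set (x := psi p) in *; clearbody x
  | H : context [psi ?p] |- _ => let x := fresh "ps" in set (x := psi p) in *; clearbody x
  end.
Ltac slia ::= genp; genr; intros; clean; lia.

Lemma psi_le p q : le p q -> psi p <= psi q.
Proof.
case/andP => h1 h2; rewrite /psi.
have := rmono h1; have := smono h2; have := smono (subsetT p.2); slia.
Qed.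

Lemma psi_lt p q : good p -> good q -> le p q -> p != q -> psi p < psi q.
Proof.
case/and3P => hp1 hp2 _; case/and3P => hq1 hq2 _ /andP[h1 h2] hne; rewrite /psi.
have := rmono h1; have := smono h2; have := smono (subsetT p.2).
case: (boolP (p.1 == q.1)) => e1.
  have e2 : p.2 != q.2 by apply: contra hne => /eqP e2; case: p q e1 e2 {hp1 hp2 hq1 hq2 h1 h2} => [a b] [c d] /= /eqP -> ->.
  have [x xp xq] : exists2 x, x \in p.2 & x \notin q.2.
    apply/subsetPn; apply: contra e2 => hs; rewrite eq_sym eqEsubset hs h2 //.
  have := sflat_lt hq2 h2 xp xq; slia.
have [x xq xp] : exists2 x, x \in q.1 & x \notin p.1.
  apply/subsetPn; apply: contra e1 => hs; rewrite eqEsubset hs h1 //.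
have := rflat_lt hp1 h1 xq xp; slia.
Qed.

Lemma psi_bound p : psi p <= #|T|.
Proof. rewrite /psi; have := rmono (subsetT p.1); have := rs_total; slia. Qed.


Lemma le_trans p q c : le p q -> le q c -> le p c.
Proof.
case/andP => h1 h2 /andP[h3 h4]; apply/andP; split; [exact: subset_trans h1 h3|exact: subset_trans h4 h2].
Qed.
Lemma le_refl p : le p p. Proof. by rewrite /le !subxx. Qed.

Section Max.
Variable S : {set {set T} * {set T}}.
Hypothesis hS : maximal_biflag ind S.
Variable e : T.
Hypothesis he : forall p, p \in S -> e \notin p.1 :&: p.2.

Lemma S_biflat p : p \in S -> biflat ind p.
Proof. by case: hS => /andP[/andP[/forall_inP h _] _] _ /h. Qed.
Lemma S_good p : p \in S -> good p.
Proof. by move/S_biflat => /andP[h1 /and5P[h2 _ _ _ h3]]; apply/and3P; split. Qed.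
Lemma S_comp p q : p \in S -> q \in S -> le p q || le q p.
Proof. by case: hS => /andP[/andP[_ /forall_inP h] _] _ /h /forall_inP h' /h'. Qed.

Lemma S_ext c : good c -> e \notin c.1 :&: c.2 -> c.1 != set0 -> c.2 != set0 ->
  (forall q, q \in S -> le q c || le c q) -> c \in S.
Proof.
move=> hc hec h1 h2 hcomp.
case: hS => hb hmax.
have hb' : biflag ind (c |: S).
  apply/andP; split; first (apply/andP; split).
  - apply/forall_inP => p; rewrite !inE => /orP[/eqP ->|/S_biflat //].
    case/and3P: hc => f1 f2 f3; rewrite /biflat !flatE f1 f2 h1 h2 f3 /= andbT.
    apply: contra hec => /andP[/eqP -> /eqP ->]; by rewrite setIT inE.
  - apply/forall_inP => p; rewrite !inE => hp; apply/forall_inP => q; rewrite !inE => hq.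
    rewrite /compatible -/(le p q) -/(le q p).
    case/orP: hp => [/eqP ->|hp]; case/orP: hq => [/eqP ->|hq].
    + by rewrite le_refl.
    + by rewrite orbC; apply: hcomp.
    + by apply: hcomp.
    + exact: S_comp.
  - apply/negP => /eqP hU.
    have : e \in \bigcup_(p in c |: S) (p.1 :&: p.2) by rewrite hU inE.
    case/bigcupP => p; rewrite !inE => /orP[/eqP ->|/he hp] hep; [by move: hec; rewrite !inE hep|by move: hp; rewrite !inE hep].
have := hmax _ hb' (subsetUr _ _) => <-; by rewrite setU11.
Qed.


Lemma S_gap p : p \in S -> (e \notin p.1) || (e \notin p.2).
Proof. by move/he; rewrite inE negb_and. Qed.

Lemma S_ne p : p \in S -> (p.1 != set0) && (p.2 != set0).
Proof. by move/S_biflat => /andP[_ /and5P[_ -> -> _ _]]. Qed.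

Lemma S_cover p : p \in S -> p.1 :|: p.2 = setT.
Proof. by move/S_good => /and3P[_ _ /eqP]. Qed.

Lemma psi_S_lo p : p \in S -> 1 <= psi p.
Proof.
move=> hp; case/andP: (S_ne hp) => h1 _; have := rpos h1; rewrite /psi.
have := smono (subsetT p.2); slia.
Qed.

Lemma psi_S_hi p : p \in S -> psi p < #|T|.
Proof.
move=> hp; case/andP: (S_ne hp) => _ h2; have := spos h2; rewrite /psi.
have := rmono (subsetT p.1); have := smono (subsetT p.2); have := rs_total; slia.
Qed.

Lemma psi_bot p : p \in S -> e \notin p.1 -> (psi p).+2 <= #|T|.
Proof.
move=> hp he1; case/andP: (S_ne hp) => _ h2; have := spos h2.
case/and3P: (S_good hp) => f1 _ _.
have := rflat_lt f1 (subsetT p.1) (in_setT e) he1; rewrite /psi.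
have := smono (subsetT p.2); have := rs_total; slia.
Qed.

Lemma psi_top q : q \in S -> e \notin q.2 -> 2 <= psi q.
Proof.
move=> hq he2; case/andP: (S_ne hq) => h1 _; have := rpos h1.
case/and3P: (S_good hq) => _ f2 _.
have := sflat_lt f2 (subsetT q.2) (in_setT e) he2; rewrite /psi; slia.
Qed.

Lemma psi_bot_top p q : p \in S -> q \in S -> e \notin p.1 -> e \notin q.2 -> (psi p).+2 <= psi q.
Proof.
move=> hp hq he1 he2.
have eq1 : e \in q.1 by move: (S_cover hq) => /setP /(_ e); rewrite !inE (negbTE he2) orbF.
have ep2 : e \in p.2 by move: (S_cover hp) => /setP /(_ e); rewrite !inE (negbTE he1).
case/orP: (S_comp hp hq) => [/andP[h1 h2]|/andP[h1 _]]; last by move: (subsetP h1 e eq1); rewrite (negbTE he1).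
case/and3P: (S_good hp) => f1 _ _; case/and3P: (S_good hq) => _ f2 _.
have := rflat_lt f1 h1 eq1 he1; have := sflat_lt f2 h2 ep2 he2.
rewrite /psi; have := smono (subsetT p.2); have := smono (subsetT q.2); slia.
Qed.

Definition mx := \max_(p | (p \in S) && (e \notin p.1)) psi p.
Definition mm := mx.+1.

Lemma mm_notin p : p \in S -> psi p != mm.
Proof.
move=> hp; case: (boolP (e \in p.1)) => he1.
- have he2 : e \notin p.2 by move: (S_gap hp); rewrite he1.
  rewrite /mm; apply/eqP => E.
  
  have : mx <= psi p - 2.
    apply/bigmax_leqP => q /andP[hq hq1]; have := psi_bot_top hq hp hq1 he2; slia.
  have := psi_top hp he2; slia.
- rewrite /mm; apply/eqP => E.
  
  have : psi p <= mx.
    by apply: (leq_bigmax_cond (P := fun p => (p \in S) && (e \notin p.1))); rewrite hp he1.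
  slia.
Qed.

Lemma card_ge2 : 2 <= #|T|.
Proof.
have h1 : setT != set0 :> {set T} by apply/set0Pn; exists e.
have := rpos h1; have := spos h1; have := rs_total; slia.
Qed.

Lemma mm_range : 1 <= mm < #|T|.
Proof.
rewrite /mm; have := card_ge2.
have : mx <= #|T| - 2.
  apply/bigmax_leqP => q /andP[hq hq1]; have := psi_bot hq hq1; slia.
move=> h1 h2; apply: leq_trans (_ : (#|T| - 2).+2 <= #|T|); [by rewrite !ltnS|slia].
Qed.

Definition bot : {set T} * {set T} := (set0, setT).
Definition top : {set T} * {set T} := (setT, set0).
Definition inW p := [|| p == bot, p == top | p \in S].

Lemma W_good p : inW p -> good p.
Proof.
case/or3P => [/eqP ->|/eqP ->|/S_good //]; rewrite /good /=.
- by rewrite rflat0 flatT set0U eqxx.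
- by rewrite sflat0 flatT setU0 eqxx.
Qed.

Lemma le_bot p : le bot p. Proof. by rewrite /le sub0set subsetT. Qed.
Lemma le_top p : le p top. Proof. by rewrite /le sub0set subsetT. Qed.

Lemma W_comp p q : inW p -> inW q -> le p q || le q p.
Proof.
case/or3P => [/eqP ->|/eqP ->|hp]; first by rewrite le_bot.
  by rewrite le_top orbT.
case/or3P => [/eqP ->|/eqP ->|hq]; first by rewrite le_bot orbT.
  by rewrite le_top.
exact: S_comp.
Qed.

Lemma W_gap p : inW p -> (e \notin p.1) || (e \notin p.2).
Proof. by case/or3P => [/eqP ->|/eqP ->|/S_gap //]; rewrite /= !inE ?orbT. Qed.

Lemma psi_botE : psi bot = 0.
Proof. have -> : psi bot = rho set0 + sig setT - sig setT by []. by rewrite r0 subnn. Qed.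
Lemma psi_topE : psi top = #|T|.
Proof. have -> : psi top = rho setT + sig setT - sig set0 by []. by rewrite s0 subn0 rs_total. Qed.

Lemma W_cover p : inW p -> p.1 :|: p.2 = setT.
Proof. by move/W_good => /and3P[_ _ /eqP]. Qed.

Lemma lower v : 1 <= v < #|T| -> v != mm -> (forall p, p \in S -> psi p != v) -> False.
Proof.
move=> /andP[v1 v2] vm hv.
have Pb : inW bot && (psi bot < v) by rewrite /inW eqxx psi_botE.
have Pt : inW top && (v < psi top) by rewrite /inW eqxx orbT psi_topE.
have [pm [Wm vm1 maxm]] : exists pm : {set T} * {set T},
    [/\ inW pm, psi pm < v & forall q, inW q -> psi q < v -> psi q <= psi pm].
  case: (@arg_maxnP _ bot (fun p => inW p && (psi p < v)) psi Pb) => pm /andP[Wm vm1] maxm.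
  by exists pm; split => // q Wq hq; apply: maxm; rewrite Wq hq.
have [pp [Wp vp1 minp]] : exists pp : {set T} * {set T},
    [/\ inW pp, v < psi pp & forall q, inW q -> v < psi q -> psi pp <= psi q].
  case: (@arg_minnP _ top (fun p => inW p && (v < psi p)) psi Pt) => pp /andP[Wp vp1] minp.
  by exists pp; split => // q Wq hq; apply: minp; rewrite Wq hq.
have sep : forall q, q \in S -> le q pm || le pp q.
  move=> q hq; have Wq : inW q by rewrite /inW hq !orbT.
  case: (ltngtP (psi q) v) => [lt|gt|/eqP eq]; last by move: (hv q hq); rewrite eq.
  + have hle : psi q <= psi pm by apply: maxm.
    case/orP: (W_comp Wq Wm) => [->//|h]; case: (eqVneq pm q) => [<-|ne]; first by rewrite le_refl.
    have := psi_lt (W_good Wm) (W_good Wq) h ne; slia.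
  + have hle : psi pp <= psi q by apply: minp.
    case/orP: (W_comp Wq Wp) => [h|->]; last by rewrite orbT.
    case: (eqVneq q pp) => [->|ne]; first by rewrite le_refl orbT.
    have := psi_lt (W_good Wq) (W_good Wp) h ne; slia.
have lemp : le pm pp.
  case/orP: (W_comp Wm Wp) => // h; have := psi_le h; slia.
have insert : forall c, good c -> e \notin c.1 :&: c.2 -> le pm c -> le c pp ->
    psi pm < psi c < psi pp -> False.
  move=> c hc hec h1 h2 /andP[c1 c2].
  have cov : c.1 :|: c.2 = setT by case/and3P: hc => _ _ /eqP.
  have ne1 : c.1 != set0.
    apply/eqP => E; move: cov; rewrite E set0U => E2; move: c1; rewrite /psi E E2 r0; slia.
  have ne2 : c.2 != set0.
    apply/eqP => E; move: cov; rewrite E setU0 => E2.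
    have := psi_bound pp; move: c2; rewrite /psi E E2 s0 rs_total; slia.
  have := S_ext hc hec ne1 ne2.
  have cS : c \in S.
    apply: S_ext hc hec ne1 ne2 _ => q hq; case/orP: (sep q hq) => h.
    - by rewrite (le_trans h h1).
    - by rewrite (le_trans h2 h) orbT.
  case/orP: (sep c cS) => /psi_le; slia.
case/and3P: (W_good Wm) => fm1 fm2 /eqP covm.
case/and3P: (W_good Wp) => fp1 fp2 /eqP covp.
case/andP: (lemp) => l1 l2.
have r12 := rmono l1; have s12 := smono l2.
have smT := smono (subsetT pm.2); have spT := smono (subsetT pp.2).
have gm := W_gap Wm; have gp := W_gap Wp.
have epsi : psi pp + rho pm.1 + sig pp.2 = psi pm + rho pp.1 + sig pm.2.
  rewrite /psi; slia.
case: (leqP (rho pm.1 + 2) (rho pp.1)) => hA.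
  have [x /and3P[xp xm xe]] : exists x, [&& x \in pp.1, x \notin pm.1 &
      ((e \in pp.1) && (e \notin pm.1)) ==> (x == e)].
    case E: ((e \in pp.1) && (e \notin pm.1)); first by exists e; rewrite eqxx andbT.
    have : pp.1 :\: pm.1 != set0.
      apply/negP => /eqP h; move/eqP: h; rewrite setD_eq0 => /rmono; slia.
    by case/set0Pn => x; rewrite inE => /andP[xm xp]; exists x; rewrite xp xm.
  have [H [fH hFH hHF xH /andP[rH1 rH2]]] := between rmono runit rsub fm1 fp1 l1 xp xm hA.
  apply: (insert (H, pm.2)).
  - rewrite /good /= fH fm2 /=; apply/eqP; apply/eqP; rewrite eqEsubset subsetT /= -covm.
    by apply: setSU.
  - rewrite /= inE negb_and; case E: ((e \in pp.1) && (e \notin pm.1)).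
    + by move: xe; rewrite E /= => /eqP <-; rewrite xH.
    + move/negbT: E; rewrite negb_and negbK => /orP[ep|em].
      * by apply/orP; left; apply: contra ep; apply: (subsetP hHF).
      * by move: gm; rewrite em /= => ->; rewrite orbT.
  - by rewrite /le /= hFH subxx.
  - by rewrite /le /= hHF l2.
  - rewrite /psi /=; slia.
case: (leqP (sig pp.2 + 2) (sig pm.2)) => hB.
  have [x /and3P[xp xm xe]] : exists x, [&& x \in pm.2, x \notin pp.2 &
      ((e \in pm.2) && (e \notin pp.2)) ==> (x == e)].
    case E: ((e \in pm.2) && (e \notin pp.2)); first by exists e; rewrite eqxx andbT.
    have : pm.2 :\: pp.2 != set0.
      apply/negP => /eqP h; move/eqP: h; rewrite setD_eq0 => /smono; slia.
    by case/set0Pn => x; rewrite inE => /andP[xm xp]; exists x; rewrite xp xm.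
  have [H [fH hFH hHF xH /andP[rH1 rH2]]] := between smono sunit ssub fp2 fm2 l2 xp xm hB.
  apply: (insert (pp.1, H)).
  - rewrite /good /= fH fp1 /=; apply/eqP; apply/eqP; rewrite eqEsubset subsetT /= -covp.
    by apply: setUS.
  - rewrite /= inE negb_and; case E: ((e \in pm.2) && (e \notin pp.2)).
    + by move: xe; rewrite E /= => /eqP <-; rewrite xH orbT.
    + move/negbT: E; rewrite negb_and negbK => /orP[ep|em].
      * by apply/orP; right; apply: contra ep; apply: (subsetP hHF).
      * by move: gp; rewrite em orbF => ->.
  - by rewrite /le /= l1 hHF.
  - by rewrite /le /= hFH subxx.
  - rewrite /psi /=; slia.
apply: (insert (pp.1, pm.2)).
- rewrite /good /= fp1 fm2 /=; apply/eqP; apply/eqP; rewrite eqEsubset subsetT /= -covm.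
  by apply: setSU.
- rewrite /= inE; apply/negP => /andP[ep em].
  have em1 : e \notin pm.1 by move: gm; rewrite em orbF.
  have ep2 : e \notin pp.2 by move: gp; rewrite ep.
  have h1 : mx <= psi pm.
    apply/bigmax_leqP => q /andP[hq hq1]; case/orP: (sep q hq) => [/psi_le //|/andP[h _]].
    by move: hq1; rewrite (subsetP h e ep).
  have h2 : psi pm <= mx.
    case/or3P: Wm => [/eqP ->|/eqP E|hm]; first by rewrite psi_botE.
    - by move: vm1; rewrite E psi_topE; slia.
    - by apply: (leq_bigmax_cond (P := fun p => (p \in S) && (e \notin p.1))); rewrite hm em1.
  have vne : v <> mx.+1 by apply/eqP.
  slia.
- by rewrite /le /= l1 subxx.
- by rewrite /le /= subxx l2.
- rewrite /psi /=; slia.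
Qed.


Lemma card_S : #|S| = #|T| - 2.
Proof.
have hlo : forall p, p \in S -> 1 <= psi p := psi_S_lo.
have hhi : forall p, p \in S -> psi p < #|T| := psi_S_hi.
have hge : 2 <= #|T| := card_ge2.
have hmr : 1 <= mm < #|T| := mm_range.
have hlow : forall v, 1 <= v < #|T| -> v != mm -> (forall p, p \in S -> psi p != v) -> False := lower.
move: (#|T|) hhi hge hmr hlow => N hhi hge hmr hlow.
have us : uniq (map psi (enum S)).
  rewrite map_inj_in_uniq ?enum_uniq // => p q; rewrite !mem_enum => hp hq E.
  apply/eqP; apply/negP => /negP ne.
  case/orP: (S_comp hp hq) => h.
  - by have := psi_lt (S_good hp) (S_good hq) h ne; rewrite E ltnn.
  - by rewrite eq_sym in ne; have := psi_lt (S_good hq) (S_good hp) h ne; rewrite E ltnn.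
have ut : uniq (rem mm (iota 1 (N - 1))) by apply: rem_uniq; apply: iota_uniq.
have hmem : map psi (enum S) =i rem mm (iota 1 (N - 1)).
  move=> v; rewrite mem_rem_uniq ?iota_uniq // inE mem_iota.
  apply/idP/idP.
  - case/mapP => p; rewrite mem_enum => hp ->; rewrite mm_notin //=.
    have := hlo p hp; have := hhi p hp; move=> a b; apply/andP; split; slia.
  - case/andP => vm /andP[v1 v2]; apply/negPn/negP => hv; exfalso.
    apply: (hlow _ _ vm) => [|p hp]; first by apply/andP; split; slia.
    by apply: contra hv => /eqP <-; apply: map_f; rewrite mem_enum.
have := perm_size (uniq_perm us ut hmem).
rewrite size_map -cardE size_rem ?size_iota //.
- by move=> ->; slia.
- rewrite mem_iota; case/andP: hmr => m1 m2; apply/andP; split; slia.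
Qed.

End Max.

End Main.

Unset Implicit Arguments.
Theorem mainTheorem2 (n r : nat) (ind : {set 'I_n.+1} -> bool) :
  is_matroid ind ->
  (forall x : 'I_n.+1, ~~ loop ind x) ->
  (forall x : 'I_n.+1, ~~ coloop ind x) ->
  mrank ind setT = r.+1 ->
  forall S : {set {set 'I_n.+1} * {set 'I_n.+1}},
    maximal_biflag ind S -> #|S| = n - 1.
Proof.
move=> [ind0 indS indA] hloop hcol _ S hS.
have noloop : forall x, ind [set x] by move=> x; move: (hloop x); rewrite /loop negbK.
have hU := hS; case: hU => /andP[_ hU] _.
have [e he] : exists e, e \notin \bigcup_(p in S) (p.1 :&: p.2).
  by move: hU; rewrite -subTset => /subsetPn [e _ he]; exists e.
have he' : forall p, p \in S -> e \notin p.1 :&: p.2.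
  by move=> p hp; apply: contra he => h; apply/bigcupP; exists p.
rewrite (card_S ind0 indS indA noloop hcol hS he') card_ord.
by rewrite subSS subn1.
Qed.
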